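(* Assume the PACE setting below. Then \[ \mathbb{E}\,\tilde{\delta}(\hat C, C) \le \frac{T}{\tau n^2}\,\mathbb{E}\|\hat C^{(S)} - C^{(S)}\|_F^2 + \pi_{\max}\,\max_{i,j}\mathbb{P}(N_{ij}<\tau), \] and moreover \[ \mathbb{E}\|\hat C^{(S)} - C^{(S)}\|_F^2 \le n^2\,\mathbb{P}(|S|<m_\star) + 4\,\mathbb{E}\big[|S|^2\,\delta(\hat Z_S, Z_S)\,\mathbf 1\{|S|\ge m_\star\}\big]. \]
   Context: PACE setting. Nodes are $[n]=\{1,\dots,n\}$; $Z\in\{0,1\}^{n\times K}$ is a fixed (true) cluster membership matrix (each row has exactly one $1$), $C=ZZ^\top$, $n_k$ is the number of nodes in cluster $k$, $\pi_k=n_k/n$, $\pi_{\max}=\max_k\pi_k$. Fix integers $m_\star\ge1$, $T\ge1$ and a real $\tau>0$. Random node subsets $S_1,\dots,S_T\subseteq[n]$ are chosen (jointly with a random network) by some sampling scheme. For a subset $S$, $C^{(S)}$ denotes the $n\times n$ matrix with $C^{(S)}_{ij}=C_{ij}$ if $i,j\in S$ and $0$ otherwise. For each $\ell$, $\hat C^{(\ell)}$ is a random $n\times n$ matrix vanishing outside $S_\ell\times S_\ell$: if $|S_\ell|\ge m_\star$ then $\hat C^{(\ell)}$ is the zero-extension of $\hat Z_{S_\ell}\hat Z_{S_\ell}^\top$, where $\hat Z_{S_\ell}\in\{0,1\}^{|S_\ell|\times K}$ is a cluster membership matrix output by some clustering algorithm on the subgraph induced by $S_\ell$; if $|S_\ell|<m_\star$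 then $\hat C^{(\ell)}=0$. It is assumed that the pairs $(S_\ell,\hat C^{(\ell)})$, $\ell=1,\dots,T$, are identically distributed, each with the distribution of a generic pair $(S,\hat C^{(S)})$ (with corresponding $\hat Z_S$). Let $y^{(\ell)}_{ij}=\mathbf 1\{i\in S_\ell, j\in S_\ell\}$, $N_{ij}=\sum_{\ell=1}^T y^{(\ell)}_{ij}$, and define the PACE estimator $\hat C_{ij} = \mathbf 1\{N_{ij}\ge\tau\}\,\frac{\sum_{\ell=1}^T y^{(\ell)}_{ij}\hat C^{(\ell)}_{ij}}{N_{ij}}$ (taken to be $0$ when $N_{ij}<\tau$). $Z_S\in\{0,1\}^{|S|\times K}$ is the submatrix of $Z$ with rows in $S$; $\delta(\hat Z_S,Z_S)=\min_Q \frac{1}{|S|}\|\hat Z_SQ-Z_S\|_0$ over $K\times K$ permutation matrices $Q$ ($\|\cdot\|_0$ counts nonzero entries); $\tilde\delta(\hat C,C)=\frac1{n^2}\|\hat C-C\|_F^2$. Expectations are over all randomness (network and sampling). *)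

(* Defs.v *)
From HB Require Import structures.
From mathcomp Require Import all_boot all_order all_algebra all_fingroup.
Set Implicit Arguments. Unset Strict Implicit. Unset Printing Implicit Defensive.
Import Order.TTheory GRing.Theory Num.Theory.
Local Open Scope ring_scope.

Section PACE.
Variable R : realFieldType.

Definition memb n K (z : 'I_n -> 'I_K) : 'M[R]_(n, K) :=
  \matrix_(i, k) (z i == k)%:R.

Definition coclust n K (z : 'I_n -> 'I_K) : 'M[R]_n :=
  memb z *m (memb z)^T.

Definition restr n (S : {set 'I_n}) (M : 'M[R]_n) : 'M[R]_n :=
  \matrix_(i, j) (if (i \in S) && (j \in S) then M i j else 0).

(* hat C^(S): zero-extension of hatZ_S hatZ_S^T if |S| >= m_star, else 0.
   hatZ_S is encoded by a labelling zh whose values on S give the rows of hatZ_S. *)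
Definition chat n K (mstar : nat) (S : {set 'I_n}) (zh : 'I_n -> 'I_K) : 'M[R]_n :=
  if (mstar <= #|S|)%N then restr S (coclust zh) else 0.

Definition frob2 n (A : 'M[R]_n) : R := \sum_i \sum_j (A i j) ^+ 2.

(* delta(hatZ_S, Z_S) = min_Q (1/|S|) || hatZ_S Q - Z_S ||_0,
   rows of the n x K matrices restricted to S (i.e. the |S| x K submatrices) *)
Definition l0_rows n K (S : {set 'I_n}) (M : 'M[R]_(n, K)) : nat :=
  #|[set ik : 'I_n * 'I_K | (ik.1 \in S) && (M ik.1 ik.2 != 0)]|.

Definition delta n K (S : {set 'I_n}) (zh z : 'I_n -> 'I_K) : R :=
  let f (s : 'S_K) := (#|S|%:R)^-1 * (l0_rows S (memb zh *m perm_mx s - memb z))%:R in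
  \big[Order.min/f 1%g]_(s : 'S_K) f s.

Definition Expect (Omega : finType) (P : Omega -> R) (X : Omega -> R) : R :=
  \sum_w P w * X w.
Definition Prob (Omega : finType) (P : Omega -> R) (E : pred Omega) : R :=
  \sum_(w | E w) P w.

Definition is_prob (Omega : finType) (P : Omega -> R) : Prop :=
  (forall w, 0 <= P w) /\ \sum_w P w = 1.

Definition Ncount n T (S : 'I_T -> {set 'I_n}) (i j : 'I_n) : R :=
  \sum_(l < T) ((i \in S l) && (j \in S l))%:R.

Definition pace n K T (mstar : nat) (tau : R) (S : 'I_T -> {set 'I_n})
    (zh : 'I_T -> 'I_n -> 'I_K) : 'M[R]_n :=
  \matrix_(i, j)
    (if tau <= Ncount S i j then
       (\sum_(l < T) ((i \in S l) && (j \in S l))%:R * chat mstar (S l) (zh l) i j)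
         / Ncount S i j
     else 0).

Definition tdelta n (A B : 'M[R]_n) : R := (n%:R ^+ 2)^-1 * frob2 (A - B).

Definition pimax n K (z : 'I_n -> 'I_K) : R :=
  \big[Num.max/0]_(k : 'I_K) (#|[set i | z i == k]|%:R / n%:R).

End PACE.

Arguments chat {R n K} mstar S zh.
Arguments restr {R n} S M.
Arguments frob2 {R n} A.
Arguments delta {R n K} S zh z.
Arguments Expect {R Omega} P X.
Arguments Prob {R Omega} P E.
Arguments is_prob {R Omega} P.
Arguments Ncount {R n T} S i j.
Arguments pace {R n K T} mstar tau S zh.
Arguments tdelta {R n} A B.
Arguments coclust R {n K} z.
Arguments pimax R {n K} z.

(* Main.v *)
Require Import Defs.
From HB Require Import structures.
From mathcomp Require Import all_boot all_order all_algebra all_fingroup.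
From mathcomp Require Import ring lra.
Import Order.TTheory GRing.Theory Num.Theory.
Local Open Scope ring_scope.

Section H.
Variable R : realFieldType.

Lemma coclustE n K (z : 'I_n -> 'I_K) i j : coclust R z i j = (z i == z j)%:R.
Proof.
rewrite !mxE (bigD1 (z i)) //= !mxE eqxx mul1r big1 ?addr0; first by rewrite eq_sym.
by move=> k hk; rewrite !mxE eq_sym (negbTE hk) mul0r.
Qed.

Lemma sum_ind n (A : {set 'I_n}) : \sum_j ((j \in A)%:R : R) = #|A|%:R.
Proof.
rewrite -sum1_card natr_sum [RHS]big_mkcond /=; apply: eq_bigr => j _.
by case: (j \in A).
Qed.

Lemma cs T (y a : 'I_T -> R) : (forall l, 0 <= y l) -> 0 < \sum_l y l ->
  ((\sum_l y l * a l) / \sum_l y l) ^+ 2 <= (\sum_l y l * a l ^+ 2) / \sum_l y l.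
Proof.
move=> y0 N0; set N := \sum_l y l; set m := (\sum_l y l * a l) / N.
have h : 0 <= \sum_l y l * (a l - m) ^+ 2 by apply: sumr_ge0 => l _; rewrite mulr_ge0 ?sqr_ge0.
have E : \sum_l y l * (a l - m) ^+ 2 =
   \sum_l y l * a l ^+ 2 - (2 * m) * \sum_l y l * a l + m ^+ 2 * N.
  rewrite /N !mulr_sumr -sumrB -big_split /=; apply: eq_bigr => l _.
  by rewrite sqrrB; ring.
have E2 : \sum_l y l * a l = m * N by rewrite /m divfK // gt_eqF.
rewrite ler_pdivlMr //.
move: h; rewrite E E2.
lra.
Qed.


Lemma restrE n (S : {set 'I_n}) (M : 'M[R]_n) i j :
  restr S M i j = if (i \in S) && (j \in S) then M i j else 0.
Proof. by rewrite mxE. Qed.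

Lemma subE n (A B : 'M[R]_n) i j : (A - B) i j = A i j - B i j.
Proof. by rewrite !mxE. Qed.

Lemma bool_sq (b1 b2 : bool) : ((b1%:R - b2%:R) ^+ 2 : R) <= 1.
Proof. by case: b1; case: b2; rewrite ?subrr ?subr0 ?sub0r ?sqrrN ?expr1n ?expr0n. Qed.

Lemma delta_s n K (z zh : 'I_n -> 'I_K) (S : {set 'I_n}) (s : 'S_K) :
  (0 < #|S|)%N ->
  frob2 (restr S (coclust R zh) - restr S (coclust R z)) <=
  4 * (#|S|%:R ^+ 2 * ((#|S|%:R)^-1 * (l0_rows S (memb R zh *m perm_mx s - memb R z))%:R)).
Proof.
move=> S0.
set D := [set i in S | s (zh i) != z i].
have hl0 : (#|D| <= l0_rows S (memb R zh *m perm_mx s - memb R z))%N.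
  rewrite /l0_rows -(card_imset D (f := fun i => (i, z i))); last first.
    by move=> a b [].
  apply: subset_leq_card; apply/subsetP => x /imsetP [i iD ->].
  move: iD; rewrite /D !inE /= => /andP [iS hi]; rewrite iS /=.
  rewrite -{1}(invgK s) -col_permE !mxE eqxx.
  have -> : (zh i == s^-1%g (z i)) = false.
    apply/negbTE; apply: contra hi => /eqP ->; by rewrite permKV.
  by rewrite sub0r oppr_eq0 oner_eq0.
have hF : frob2 (restr S (coclust R zh) - restr S (coclust R z)) <=
    \sum_i \sum_j (((i \in D)%:R * (j \in S)%:R + (i \in S)%:R * (j \in D)%:R) : R).
  apply: ler_sum => i _; apply: ler_sum => j _.
  rewrite subE !restrE !coclustE.
  case iS : (i \in S); case jS : (j \in S) => /=; rewrite ?subrr ?expr0n /=;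
    try by apply: addr_ge0; apply: mulr_ge0.
  rewrite !inE iS jS /= mul1r.
  case: (eqVneq (s (zh i)) (z i)) => hi; last first.
    apply: le_trans (bool_sq _ _) _; by rewrite /= mulr1 lerDl ler0n.
  case: (eqVneq (s (zh j)) (z j)) => hj; last first.
    apply: le_trans (bool_sq _ _) _; by rewrite /= mulr1 add0r.
  by rewrite -(inj_eq (@perm_inj _ s)) hi hj subrr expr0n /= mul0r addr0.
apply: le_trans hF _.
under eq_bigr => i _ do rewrite big_split /=. rewrite big_split /=.
have -> : \sum_i \sum_j ((i \in D)%:R * (j \in S)%:R : R) = #|D|%:R * #|S|%:R.
  rewrite -sum_ind mulr_suml; apply: eq_bigr => i _; by rewrite -sum_ind mulr_sumr.
have -> : \sum_i \sum_j ((i \in S)%:R * (j \in D)%:R : R) = #|S|%:R * #|D|%:R.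
  rewrite -sum_ind mulr_suml; apply: eq_bigr => i _; by rewrite -sum_ind mulr_sumr.
have Sn : (#|S|%:R : R) != 0 by rewrite pnatr_eq0 -lt0n.
have -> : (#|S|%:R : R) ^+ 2 * ((#|S|%:R)^-1 * (l0_rows S (memb R zh *m perm_mx s - memb R z))%:R)
   = #|S|%:R * (l0_rows S (memb R zh *m perm_mx s - memb R z))%:R.
  by rewrite expr2 -mulrA mulVKf.
have hl : (#|D|%:R : R) <= (l0_rows S (memb R zh *m perm_mx s - memb R z))%:R by rewrite ler_nat.
have hS : (0 : R) <= #|S|%:R by [].
have hD : (0 : R) <= #|D|%:R by [].
nra.
Qed.


Lemma delta_bound n K (z zh : 'I_n -> 'I_K) (S : {set 'I_n}) :
  (0 < #|S|)%N ->
  frob2 (restr S (coclust R zh) - restr S (coclust R z)) <=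
  4 * (#|S|%:R ^+ 2 * delta S zh z).
Proof.
move=> S0; rewrite /delta.
apply: (big_ind (fun x => frob2 (restr S (coclust R zh) - restr S (coclust R z)) <=
  4 * (#|S|%:R ^+ 2 * x))).
- exact: delta_s.
- move=> x y hx hy; rewrite /Order.min; by case: ifP.
- move=> s _; exact: delta_s.
Qed.

Lemma pw2 n K (z : 'I_n -> 'I_K) (zh : 'I_n -> 'I_K) mstar (S : {set 'I_n}) :
  (1 <= mstar)%N ->
  frob2 (chat mstar S zh - restr S (coclust R z)) <=
  n%:R ^+ 2 * ((#|S| < mstar)%N)%:R
  + 4 * (#|S|%:R ^+ 2 * delta S zh z * ((mstar <= #|S|)%N)%:R).
Proof.
move=> m1; rewrite /chat; case: (leqP mstar #|S|) => hm.
  rewrite /= mulr0 add0r mulr1.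
  apply: delta_bound; exact: leq_trans m1 hm.
rewrite /= mulr0 mulr0 addr0 mulr1 sub0r.
apply: (@le_trans _ _ (\sum_(i < n) \sum_(j < n) (1 : R))).
  apply: ler_sum => i _; apply: ler_sum => j _.
  rewrite mxE sqrrN restrE coclustE.
  case: (_ && _); last by rewrite expr0n ler01.
  by case: (_ == _); rewrite ?expr1n ?expr0n ?ler01.
by rewrite !sumr_const card_ord -(mulr_natl (n%:R : R) n) -expr2.
Qed.


Lemma pw1 n K T mstar (tau : R) (z : 'I_n -> 'I_K) (S : 'I_T -> {set 'I_n})
  (zh : 'I_T -> 'I_n -> 'I_K) : 0 < tau ->
  tdelta (pace mstar tau S zh) (coclust R z) <=
  (tau * n%:R ^+ 2)^-1 * \sum_l frob2 (chat mstar (S l) (zh l) - restr (S l) (coclust R z))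
  + (n%:R ^+ 2)^-1 * \sum_i \sum_j (coclust R z i j) ^+ 2 * (Ncount S i j < tau)%R%:R.
Proof.
move=> tau0; rewrite /tdelta (invfM tau) [tau^-1 * _]mulrC -mulrA -mulrDr.
apply: ler_wpM2l; first by rewrite invr_ge0 exprn_ge0 // ler0n.
rewrite /frob2.
set f := fun l i j => (chat mstar (S l) (zh l) - restr (S l) (coclust R z)) i j ^+ 2.
have -> : tau^-1 * (\sum_l \sum_i \sum_j f l i j) = \sum_i \sum_j \sum_l tau^-1 * f l i j.
  transitivity (\sum_l \sum_i \sum_j tau^-1 * f l i j).
    rewrite mulr_sumr; apply: eq_bigr => l _; rewrite mulr_sumr; apply: eq_bigr => i _.
    by rewrite mulr_sumr.
  rewrite exchange_big; apply: eq_bigr => i _; by rewrite exchange_big.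
rewrite -big_split /=; apply: ler_sum => i _.
rewrite -big_split /=; apply: ler_sum => j _.
rewrite /f.
rewrite subE mxE; case: ifP => hN; last first.
  rewrite ltNge hN /= mulr1 sub0r sqrrN lerDr.
  by apply: sumr_ge0 => l _; apply: mulr_ge0; [rewrite invr_ge0 ltW | exact: sqr_ge0].
rewrite ltNge hN /= mulr0 addr0.
set N := Ncount S i j.
set c := coclust R z i j.
pose y l : R := ((i \in S l) && (j \in S l))%:R.
pose a l := chat mstar (S l) (zh l) i j - c.
have N0 : 0 < N by apply: lt_le_trans hN.
have hNy : N = \sum_l y l by [].
have E : (\sum_l y l * chat mstar (S l) (zh l) i j) / N - c = (\sum_l y l * a l) / N.
  have -> : \sum_l y l * a l = \sum_l y l * chat mstar (S l) (zh l) i j - c * N.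
    rewrite hNy mulr_sumr -sumrB; apply: eq_bigr => l _; rewrite /a; ring.
  by rewrite mulrBl mulfK // gt_eqF.
have N0' : 0 < \sum_l y l by rewrite -hNy.
have hc := @cs _ y a (fun l => ler0n _ _) N0'.
rewrite E; rewrite -hNy in hc; apply: le_trans hc _.
apply: (@le_trans _ _ ((\sum_l y l * a l ^+ 2) / tau)).
  apply: ler_wpM2l.
    by apply: sumr_ge0 => l _; rewrite mulr_ge0 ?sqr_ge0 // /y ler0n.
  by rewrite lef_pV2 // posrE.
rewrite mulr_suml; apply: ler_sum => l _; rewrite mulrC; apply: ler_wpM2l.
  by rewrite invr_ge0 ltW.
rewrite subE restrE /y /a.
case: (_ && _); first by rewrite mul1r.
by rewrite mul0r sqr_ge0.
Qed.


Lemma Prob_ind (Omega : finType) (P : Omega -> R) (E : pred Omega) :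
  Prob P E = \sum_w P w * (E w)%:R.
Proof.
rewrite /Prob big_mkcond /=; apply: eq_bigr => w _.
by case: (E w); rewrite ?mulr1 ?mulr0.
Qed.

Lemma Expect_le (Omega : finType) (P : Omega -> R) (X Y : Omega -> R) :
  is_prob P -> (forall w, X w <= Y w) -> Expect P X <= Expect P Y.
Proof.
move=> [P0 _] h; apply: ler_sum => w _; exact: ler_wpM2l.
Qed.

Lemma ident (Omega : finType) (T : eqType) (P : Omega -> R) (X Y : Omega -> T) (G : T -> R) :
  (forall v, Prob P (fun w => X w == v) = Prob P (fun w => Y w == v)) ->
  Expect P (fun w => G (X w)) = Expect P (fun w => G (Y w)).
Proof.
move=> h.
set s := undup (map X (enum Omega) ++ map Y (enum Omega)).
have key : forall Z : Omega -> T, (forall w, Z w \in s) ->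
    Expect P (fun w => G (Z w)) = \sum_(v <- s) G v * Prob P (fun w => Z w == v).
  move=> Z hZ.
  transitivity (\sum_(v <- s) \sum_w (Z w == v)%:R * (G v * P w)); last first.
    apply: eq_bigr => v _; rewrite Prob_ind mulr_sumr; apply: eq_bigr => w _.
    by case: (Z w == v); rewrite ?mul1r ?mul0r ?mulr1 ?mulr0.
  rewrite exchange_big /Expect; apply: eq_bigr => w _.
  rewrite (bigD1_seq (Z w)) //= ?undup_uniq // eqxx mul1r big1_seq ?addr0; first exact: mulrC.
  by move=> v /andP [hv _]; rewrite eq_sym (negbTE hv) mul0r.
rewrite !key; first (by apply: eq_bigr => v _; rewrite h).
- by move=> w; rewrite mem_undup mem_cat map_f ?orbT ?mem_enum.
- by move=> w; rewrite mem_undup mem_cat map_f ?mem_enum.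
Qed.

Lemma bigmax_ge0 (I : finType) (F : I -> R) : 0 <= \big[Num.max/0]_i F i.
Proof.
apply: (big_rec (fun x => 0 <= x)) => // i x _ hx.
by rewrite le_max hx orbT.
Qed.

Lemma second_bound n K (z : 'I_n -> 'I_K) (p : 'I_n -> 'I_n -> R) :
  (forall i j, 0 <= p i j) ->
  (n%:R ^+ 2)^-1 * \sum_i \sum_j (coclust R z i j) ^+ 2 * p i j
  <= pimax R z * \big[Num.max/0]_i \big[Num.max/0]_j p i j.
Proof.
move=> p0.
set M := \big[Num.max/0]_i \big[Num.max/0]_j p i j.
have M0 : 0 <= M by apply: bigmax_ge0.
have pM : forall i j, p i j <= M.
  move=> i j; apply: le_trans (le_bigmax _ _ i).
  exact: (le_bigmax _ (fun j => p i j) j).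
have pi0 : 0 <= pimax R z by apply: bigmax_ge0.
have hc : forall i, \sum_j (coclust R z i j) ^+ 2 * p i j <=
     M * #|[set j | z j == z i]|%:R.
  move=> i; rewrite -sum_ind mulr_sumr; apply: ler_sum => j _.
  rewrite coclustE inE eq_sym; case: (z j == z i); rewrite ?expr1n ?mul1r ?mulr1 //.
  by rewrite expr0n /= !mul0r mulr0.
apply: (@le_trans _ _ ((n%:R ^+ 2)^-1 * \sum_(i < n) M * #|[set j | z j == z i]|%:R)).
  by apply: ler_wpM2l; [rewrite invr_ge0 exprn_ge0 // ler0n | apply: ler_sum => i _].
have hk : forall i, (#|[set j | z j == z i]|%:R : R) / n%:R <= pimax R z.
  move=> i; exact: (le_bigmax _ (fun k => (#|[set j | z j == k]|%:R : R) / n%:R) (z i)).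
case: (posnP n) => [n0|npos].
  rewrite big1 ?mulr0 ?mulr_ge0 // => i _.
  exfalso; move: (ltn_ord i); by rewrite [X in (_ < X)%N]n0.
have n0 : (n%:R : R) != 0 by rewrite pnatr_eq0 -lt0n.
apply: (@le_trans _ _ ((n%:R)^-1 * \sum_(i < n) M * pimax R z)).
  rewrite expr2 invfM -mulrA; apply: ler_wpM2l; first by rewrite invr_ge0 ler0n.
  rewrite mulr_sumr; apply: ler_sum => i _.
  rewrite mulrCA; apply: ler_wpM2l => //; rewrite mulrC; exact: hk.
by rewrite sumr_const card_ord -(mulr_natl (M * pimax R z) n) mulKf // mulrC.
Qed.


Lemma eqle (x y : R) : x = y -> x <= y.
Proof. by move->. Qed.

End H.

Theorem mainTheorem2 (R : realFieldType) (n K : nat) (z : 'I_n -> 'I_K)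
  (mstar T : nat) (tau : R)
  (Omega : finType) (P : Omega -> R)
  (S : 'I_T -> Omega -> {set 'I_n}) (zh : 'I_T -> Omega -> 'I_n -> 'I_K)
  (S0 : Omega -> {set 'I_n}) (zh0 : Omega -> 'I_n -> 'I_K) :
  (1 <= mstar)%N -> (1 <= T)%N -> 0 < tau ->
  is_prob P ->
  (forall (l : 'I_T) (A : {set 'I_n}) (B : 'M[R]_n),
     Prob P (fun w => (S l w == A) && (chat mstar (S l w) (zh l w) == B)) =
     Prob P (fun w => (S0 w == A) && (chat mstar (S0 w) (zh0 w) == B))) ->
  let C := coclust R z in
  let EF := Expect P (fun w =>
              frob2 (chat mstar (S0 w) (zh0 w) - restr (S0 w) C)) in
  Expect P (fun w => tdelta (pace mstar tau (fun l => S l w) (fun l => zh l w)) C)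
    <= T%:R / (tau * n%:R ^+ 2) * EF
       + pimax R z * \big[Num.max/0]_(i : 'I_n) \big[Num.max/0]_(j : 'I_n)
                      Prob P (fun w => Ncount (fun l => S l w) i j < tau)
  /\
  EF <= n%:R ^+ 2 * Prob P (fun w => (#|S0 w| < mstar)%N)
        + 4 * Expect P (fun w => #|S0 w|%:R ^+ 2 * delta (S0 w) (zh0 w) z
                                  * ((mstar <= #|S0 w|)%N)%:R).
Proof.
move=> m1 T1 tau0 hP hid C EF.
split.
  apply: le_trans (@Expect_le R Omega P _ (fun w =>
     (tau * n%:R ^+ 2)^-1 * \sum_l frob2 (chat mstar (S l w) (zh l w) - restr (S l w) C)
     + (n%:R ^+ 2)^-1 * \sum_i \sum_j (C i j) ^+ 2
          * (Ncount (fun l => S l w) i j < tau)%R%:R) hP _) _.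
    by move=> w; apply: pw1.
  set a := (tau * n%:R ^+ 2)^-1.
  set b := (n%:R ^+ 2)^-1.
  have hl : forall l : 'I_T, Expect P (fun w =>
      frob2 (chat mstar (S l w) (zh l w) - restr (S l w) C)) = EF.
    move=> l.
    have := @ident R Omega _ P (fun w => (S l w, chat mstar (S l w) (zh l w)))
      (fun w => (S0 w, chat mstar (S0 w) (zh0 w))) (fun p => frob2 (p.2 - restr p.1 C)).
    apply; case=> A B; exact: hid.
  have E1 : Expect P (fun w =>
     a * \sum_l frob2 (chat mstar (S l w) (zh l w) - restr (S l w) C)
     + b * \sum_i \sum_j (C i j) ^+ 2 * (Ncount (fun l => S l w) i j < tau)%R%:R)
     = a * (T%:R * EF) + b * \sum_i \sum_j (C i j) ^+ 2
          * Prob P (fun w => Ncount (fun l => S l w) i j < tau).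
    rewrite /Expect; under eq_bigr do rewrite mulrDr.
    rewrite big_split /=; congr (_ + _).
      have <- : \sum_(l < T) EF = T%:R * EF by rewrite sumr_const card_ord mulr_natl.
      under [in RHS]eq_bigr => l _ do rewrite -(hl l).
      rewrite /Expect exchange_big /= mulr_sumr; apply: eq_bigr => w _.
      by rewrite mulrCA mulr_sumr.
    transitivity (\sum_w \sum_i \sum_j b * (P w * ((C i j) ^+ 2
          * (Ncount (fun l => S l w) i j < tau)%R%:R))).
      apply: eq_bigr => w _; rewrite mulrCA !mulr_sumr; apply: eq_bigr => i _.
      by rewrite !mulr_sumr.
    rewrite exchange_big /= mulr_sumr; apply: eq_bigr => i _.
    rewrite exchange_big /= mulr_sumr; apply: eq_bigr => j _.
    rewrite Prob_ind !mulr_sumr; apply: eq_bigr => w _; ring.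
  rewrite E1; apply: lerD.
    apply: eqle; rewrite /a; ring.
  apply: second_bound => i j; rewrite /Prob; apply: sumr_ge0 => w _; exact: hP.1.
apply: le_trans (@Expect_le R Omega P _ (fun w =>
   n%:R ^+ 2 * ((#|S0 w| < mstar)%N)%:R
   + 4 * (#|S0 w|%:R ^+ 2 * delta (S0 w) (zh0 w) z * ((mstar <= #|S0 w|)%N)%:R)) hP _) _.
  by move=> w; apply: pw2.
apply: eqle; rewrite /Expect Prob_ind !mulr_sumr -big_split; apply: eq_bigr => w _ /=; ring.
Qed.
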